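(* The automorphism $\mathcal R^{\mathcal W}$ acts on central elements of $\operatorname{Div}(\mathcal W_\xi^{\otimes2})$ by \[ \mathcal R^{\mathcal W}(z_i)=z_i,\quad \mathcal R^{\mathcal W}(x_1^N)=x_1^NG,\quad \mathcal R^{\mathcal W}(x_2^N)=x_2^NG^{-1}, \] \[ \mathcal R^{\mathcal W}(y_1^{-N})=y_2^{-N}+\Big(y_1^{-N}-\frac{y_2^{-N}}{z_2^N}\Big)x_2^{-N},\qquad \mathcal R^{\mathcal W}(y_2^{N})=\frac{z_1^N}{z_2^N}y_1^N+\Big(y_2^N-\frac{y_1^N}{z_2^N}\Big)x_1^N, \] with $G=1+x_1^{-N}\frac{y_1^N}{y_2^N}(x_1^N-z_1^N)(x_2^N-z_2^{-N})$, and the inverse acts by \[ (\mathcal R^{\mathcal W})^{-1}(x_1^N)=x_1^N\tilde G^{-1},\quad (\mathcal R^{\mathcal W})^{-1}(x_2^N)=x_2^N\tilde G, \] \[ (\mathcal R^{\mathcal W})^{-1}(y_1^{-N})=\frac{z_1^N}{z_2^N}y_2^{-N}+(y_1^{-N}-z_1^Ny_2^{-N})x_2^N,\qquad (\mathcal R^{\mathcal W})^{-1}(y_2^N)=y_1^N+(y_2^N-z_1^Ny_1^N)x_1^{-N}, \] with $\tilde G=1+x_2^{-N}\frac{y_1^N}{y_2^N}(x_1^N-z_1^N)(x_2^N-z_2^{-N})$.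
   Context: $N\ge2$, $\xi=e^{\pi i/N}$. $\mathcal W_\xi$ is the $\mathbb C$-algebra generated by invertible $x,y$ and central invertible $z$ with $xy=\xi^2yx$; in $\mathcal W_\xi^{\otimes 2}$ write $x_1=x\otimes 1$, $y_2=1\otimes y$, etc. $\mathcal R^{\mathcal W}$ is the algebra automorphism of the division algebra $\operatorname{Div}(\mathcal W_\xi^{\otimes2})$ given on generators (with $q=\xi$) by $\mathcal R^{\mathcal W}(z_i)=z_i$, $\mathcal R^{\mathcal W}(x_1)=x_1g$, $\mathcal R^{\mathcal W}(x_2)=g^{-1}x_2$, $\mathcal R^{\mathcal W}(y_1^{-1})=y_2^{-1}+(y_1^{-1}-z_2^{-1}y_2^{-1})x_2^{-1}$, $\mathcal R^{\mathcal W}(y_2)=\frac{z_1}{z_2}y_1+(y_2-z_2^{-1}y_1)x_1$, where $g=1-x_1^{-1}y_1(z_1-x_1)y_2^{-1}(x_2-z_2^{-1})$. *)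

(* Defs.v *)
From mathcomp Require Import all_boot all_order all_algebra.
From mathcomp Require Import reals trigo.
From mathcomp Require Import complex.
Set Implicit Arguments. Unset Strict Implicit. Unset Printing Implicit Defensive.
Import GRing.Theory Num.Theory.
Local Open Scope ring_scope.
Local Open Scope complex_scope.

(* xi = e^{pi i / N} = cos(pi/N) + i sin(pi/N). *)
Definition xi (R : realType) (N : nat) : R[i] :=
  cos (pi / N%:R) +i* sin (pi / N%:R).

(* exponent vectors of the monomials x1^a y1^b z1^c x2^d y2^e z2^f *)
Definition expo := (int * int * int * int * int * int)%type.

Section W2.
Variables (C : fieldType) (D : unitAlgType C).
Variables (x1 y1 z1 x2 y2 z2 : D).

Definition mono (m : expo) : D :=
  let: (a, b, c, d, e, f) := m in
  x1 ^ a * y1 ^ b * z1 ^ c * x2 ^ d * y2 ^ e * z2 ^ f.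

(* d lies in the image of W_xi^{(x)2}: a finite C-linear combination of monomials *)
Definition inW (d : D) : Prop :=
  exists (s : seq expo) (c : expo -> C), d = \sum_(m <- s) c m *: mono m.

(* Defining relations of W_q^{(x)2} (q-commutation x_i y_i = q^2 y_i x_i,
   all other generators commute, z_i central, all generators invertible). *)
Definition W2_relations (q : C) : Prop :=
  [/\ all (fun w => w \is a GRing.unit) [:: x1; y1; z1; x2; y2; z2],
      x1 * y1 = q ^+ 2 *: (y1 * x1), x2 * y2 = q ^+ 2 *: (y2 * x2),
      [/\ GRing.comm x1 x2, GRing.comm x1 y2, GRing.comm y1 x2 & GRing.comm y1 y2] &
      (forall w, w \in [:: x1; y1; z1; x2; y2; z2] ->
         GRing.comm z1 w /\ GRing.comm z2 w)].

(* No further relations: the ordered monomials are C-linearly independent,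
   i.e. the algebra map W_q^{(x)2} -> D is injective. *)
Definition monomials_free : Prop :=
  forall (s : seq expo) (c : expo -> C), uniq s ->
    \sum_(m <- s) c m *: mono m = 0 -> forall m, m \in s -> c m = 0.

(* D is a division ring which is the (Ore) skew field of fractions of the
   image of W_q^{(x)2}: every element is p s^{-1} with p, s in W. *)
Definition is_Div_W2 (q : C) : Prop :=
  [/\ forall d : D, d != 0 -> d \is a GRing.unit,
      W2_relations q, monomials_free &
      forall d : D, exists p s, [/\ inW p, inW s, s != 0 & d = p / s]].

Definition gW : D := 1 - x1^-1 * y1 * (z1 - x1) * y2^-1 * (x2 - z2^-1).

Definition RW_on_generators (RW : D -> D) : Prop :=
  [/\ RW z1 = z1 /\ RW z2 = z2,
      RW x1 = x1 * gW, RW x2 = gW^-1 * x2,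
      RW (y1^-1) = y2^-1 + (y1^-1 - z2^-1 * y2^-1) * x2^-1 &
      RW y2 = z1 / z2 * y1 + (y2 - z2^-1 * y1) * x1].

Variable N : nat.

Definition GW : D :=
  1 + x1 ^- N * (y1 ^+ N / y2 ^+ N) * (x1 ^+ N - z1 ^+ N) * (x2 ^+ N - z2 ^- N).

Definition GWt : D :=
  1 + x2 ^- N * (y1 ^+ N / y2 ^+ N) * (x1 ^+ N - z1 ^+ N) * (x2 ^+ N - z2 ^- N).

End W2.

(* Main.v *)
Require Import Defs.
From HB Require Import structures.
From mathcomp Require Import all_boot all_order all_algebra.
From mathcomp Require Import reals trigo.
From mathcomp Require Import complex.
From mathcomp Require Import boolp.
From mathcomp Require Import ring zify.
Set Implicit Arguments. Unset Strict Implicit. Unset Printing Implicit Defensive.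
Import GRing.Theory Num.Theory.
Local Open Scope ring_scope.

Section QC.
Variables (C : fieldType) (D : unitAlgType C).
Implicit Types (a b c : D) (w : C).

Definition qc w a b := b * a = w *: (a * b).

Lemma qcW w w' a b : qc w a b -> w = w' -> qc w' a b.
Proof. by move=> h <-. Qed.

Lemma qc_comm a b : GRing.comm a b -> qc 1 a b.
Proof. by rewrite /qc scale1r. Qed.

Lemma qc_commE a b : qc 1 a b -> GRing.comm a b.
Proof. by rewrite /qc scale1r /GRing.comm. Qed.

Lemma qcM_r w w' a b c : qc w a b -> qc w' a c -> qc (w * w') a (b * c).
Proof.
rewrite /qc => hb hc; rewrite -mulrA hc -scalerAr [b * (a * c)]mulrA hb -scalerAl.
by rewrite scalerA [a * (b * c)]mulrA mulrC.
Qed.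

Lemma qcM_l w w' a b c : qc w a c -> qc w' b c -> qc (w * w') (a * b) c.
Proof.
rewrite /qc => ha hb; rewrite [c * (a * b)]mulrA ha -scalerAl -[a * c * b]mulrA hb -scalerAr.
by rewrite scalerA mulrA.
Qed.

Lemma qcD_r w a b c : qc w a b -> qc w a c -> qc w a (b + c).
Proof. by rewrite /qc => hb hc; rewrite mulrDl mulrDr hb hc scalerDr. Qed.

Lemma qcD_l w a b c : qc w a c -> qc w b c -> qc w (a + b) c.
Proof. by rewrite /qc => ha hb; rewrite mulrDl mulrDr ha hb scalerDr. Qed.

Lemma qcN_r w a b : qc w a b -> qc w a (- b).
Proof. by rewrite /qc => h; rewrite mulNr mulrN h scalerN. Qed.

Lemma qcN_l w a b : qc w a b -> qc w (- a) b.
Proof. by rewrite /qc => h; rewrite mulNr mulrN h scalerN. Qed.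

Lemma qcB_r w a b c : qc w a b -> qc w a c -> qc w a (b - c).
Proof. by move=> hb hc; apply: qcD_r => //; apply: qcN_r. Qed.

Lemma qcB_l w a b c : qc w a c -> qc w b c -> qc w (a - b) c.
Proof. by move=> ha hb; apply: qcD_l => //; apply: qcN_l. Qed.

Lemma qc_sym w a b : w != 0 -> qc w a b -> qc w^-1 b a.
Proof. by rewrite /qc => w0 h; rewrite h scalerA mulVf // scale1r. Qed.

Lemma qcV_r w a b : w != 0 -> b \is a GRing.unit -> qc w a b -> qc w^-1 a b^-1.
Proof.
rewrite /qc => w0 bu h.
have e : a * b^-1 = w *: (b^-1 * a).
  by rewrite -{1}(mulKr bu a) h -scalerAr -scalerAl mulrA (mulrK bu).
by rewrite e scalerA mulVf // scale1r.
Qed.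

Lemma qcV_l w a b : w != 0 -> a \is a GRing.unit -> qc w a b -> qc w^-1 a^-1 b.
Proof.
rewrite /qc => w0 au h.
have e : a^-1 * b = w *: (b * a^-1).
  by rewrite -{1}(mulrK au b) h -scalerAl -scalerAr -[a * b * a^-1]mulrA (mulKr au).
by rewrite e scalerA mulVf // scale1r.
Qed.

Lemma qc1r w a : qc 1 a 1.
Proof. by rewrite /qc mul1r mulr1 scale1r. Qed.

Lemma qc1l a : qc 1 1 a.
Proof. by rewrite /qc mul1r mulr1 scale1r. Qed.

Lemma qcX_r w a b n : qc w a b -> qc (w ^+ n) a (b ^+ n).
Proof.
move=> h; elim: n => [|n ih]; first by rewrite !expr0; apply: qc1r.
by rewrite !exprS; apply: qcM_r.
Qed.

Lemma qcX_l w a b n : qc w a b -> qc (w ^+ n) (a ^+ n) b.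
Proof.
move=> h; elim: n => [|n ih]; first by rewrite !expr0; apply: qc1l.
by rewrite !exprS; apply: qcM_l.
Qed.

Lemma qcZ_r w k a b : qc w a b -> qc w a (k *: b).
Proof. by rewrite /qc => h; rewrite -scalerAl h -scalerAr !scalerA mulrC. Qed.

Lemma qcZ_l w k a b : qc w a b -> qc w (k *: a) b.
Proof. by rewrite /qc => h; rewrite -scalerAr h -scalerAl !scalerA mulrC. Qed.

Lemma qc_prod_pow w x y n : qc w y x ->
  (y * x) ^+ n = w ^+ 'C(n, 2) *: (y ^+ n * x ^+ n).
Proof.
move=> h; elim: n => [|n ih]; first rewrite !expr0 mulr1 scale1r //.
have hx := qcX_r n h.
rewrite exprSr ih -scalerAl -[_ * (y * x)]mulrA [x ^+ n * (y * x)]mulrA hx.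
rewrite -scalerAl -scalerAr scalerA -[y * x ^+ n * x]mulrA -exprSr.
rewrite [y ^+ n * _]mulrA -exprSr.
by rewrite binS bin1 exprD.
Qed.


Section QB.
Variables (w : C) (N : nat).
Hypothesis hwN : w ^+ N = 1.
Hypothesis hw : forall j, (0 < j < N)%N -> w ^+ j != 1.

Fixpoint gq (n k : nat) : C :=
  match n with
  | 0 => (k == 0)%N%:R
  | n'.+1 => (if k is k'.+1 then gq n' k' else 0) + w ^+ k * gq n' k
  end.

Lemma gq_gt n k : (n < k)%N -> gq n k = 0.
Proof.
elim: n k => [|n ih] [|k] //= hk.
by rewrite !ih ?mulr0 ?addr0 //; exact: ltnW.
Qed.

Lemma gq_n0 n : gq n 0 = 1.
Proof. by elim: n => [|n ih] //=; rewrite ih add0r expr0 mulr1. Qed.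

Lemma gq_nn n : gq n n = 1.
Proof. by elim: n => [|n ih] //=; rewrite ih gq_gt // mulr0 addr0. Qed.

Lemma qc_expand u v n : qc w u v ->
  (u + v) ^+ n = \sum_(0 <= k < n.+1) gq n k *: (u ^+ k * v ^+ (n - k)).
Proof.
move=> h; elim: n => [|n ih].
  by rewrite big_nat1 /= !expr0 mulr1 scale1r.
rewrite exprS ih mulr_sumr.
under eq_bigr do rewrite mulrDl -!scalerAr.
rewrite big_split /=.
have e1 : \sum_(0 <= k < n.+2) (if k is k'.+1 then gq n k' else 0) *: (u ^+ k * v ^+ (n.+1 - k))
   = \sum_(0 <= i < n.+1) gq n i *: (u * (u ^+ i * v ^+ (n - i))).
  rewrite big_nat_recl //= scale0r add0r; apply: eq_bigr => i _.
  by rewrite subSS mulrA -exprS.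
have e2 : \sum_(0 <= k < n.+2) (w ^+ k * gq n k) *: (u ^+ k * v ^+ (n.+1 - k))
   = \sum_(0 <= i < n.+1) gq n i *: (v * (u ^+ i * v ^+ (n - i))).
  rewrite big_nat_recr //= gq_gt // mulr0 scale0r addr0.
  apply: eq_big_nat => i /andP [_ hi].
  rewrite mulrA (qcX_l i h) -scalerAl scalerA mulrC -mulrA -exprS subSn //.
rewrite -e1 -e2 -big_split /=; apply: eq_bigr => k _.
by rewrite -scalerDl.
Qed.

Lemma gq_prod n k : gq n k * \prod_(0 <= i < k) (1 - w ^+ i.+1)
   = \prod_(0 <= i < k) (1 - w ^+ (n - i)).
Proof.
elim: n k => [|n ih] [|k].
- by rewrite !big_geq // mulr1.
- by rewrite /= mul0r big_nat_recl // subn0 expr0 subrr mul0r.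
- by rewrite gq_n0 !big_geq // mulr1.
rewrite /= mulrDl -mulrA ih [X in gq n k * X]big_nat_recr //= mulrA ih.
rewrite [X in _ + _ * X]big_nat_recr //= big_nat_recl //= subn0.
under [X in _ = _ * X]eq_bigr do rewrite subSS.
set Q := \prod_(0 <= i < k) _.
case: (leqP k n) => hk.
  have e : w ^+ k.+1 * w ^+ (n - k) = w ^+ n.+1 by rewrite -exprD addSn subnKC.
  rewrite -e; ring.
have -> : Q = 0.
  apply/eqP; rewrite prodf_seq_eq0; apply/seq.hasP; exists n.
    by rewrite mem_index_iota.
  by rewrite subnn expr0 subrr eqxx.
by rewrite !(mul0r, mulr0, addr0).
Qed.

Lemma gq_vanish k : (0 < k < N)%N -> gq N k = 0.
Proof.
case/andP => k0 kN.
have := gq_prod N k; case: k k0 kN => // k _ kN.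
rewrite [X in _ = X]big_nat_recl // subn0 hwN subrr mul0r.
move/eqP; rewrite mulf_eq0 => /orP [/eqP //|].
rewrite prodf_seq_eq0; case/seq.hasP => i; rewrite mem_index_iota => /andP [_ ik].
rewrite subr_eq0 eq_sym => /eqP h; have := hw (j := i.+1).
have hh : (0 < i.+1 < N)%N by rewrite ltn0Sn /=; exact: leq_ltn_trans ik kN.
by move=> H; move: (H hh); rewrite h eqxx.
Qed.

Lemma qc_binom u v : (0 < N)%N -> qc w u v -> (u + v) ^+ N = u ^+ N + v ^+ N.
Proof.
move=> N0 h; rewrite (qc_expand _ h).
case: N N0 hwN hw gq_vanish => [//|M] _ _ _ van.
rewrite big_nat_recl; last exact: leq0n.
rewrite big_nat_recr; last exact: leq0n.
rewrite gq_n0 gq_nn subn0 subnn !expr0 mul1r mulr1 !scale1r.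
rewrite big_nat_cond big1; first by rewrite /= add0r addrC.
move=> i /andP [/andP [_ hi] _].
by rewrite van ?scale0r // ltnS hi.
Qed.
End QB.

End QC.

Section Cen.
Variables (C : fieldType) (D : unitAlgType C).
Definition central (d : D) : bool := `[< forall e : D, GRing.comm d e >].
Lemma centralP d : reflect (forall e, GRing.comm d e) (central d).
Proof. exact: asboolP. Qed.
Lemma central_divring : divring_closed central.
Proof.
split.
- by apply/centralP => e; exact/commr_sym/commr1.
- move=> a b /centralP ha /centralP hb; apply/centralP => e.
  by apply/commr_sym/commrB; apply/commr_sym; [apply: ha | apply: hb].
- move=> a b /centralP ha /centralP hb; apply/centralP => e.
  apply/commr_sym/commrM; first exact/commr_sym/ha.
  by apply/commrV/commr_sym/hb.
Qed.
End Cen.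

HB.instance Definition _ (C : fieldType) (D : unitAlgType C) :=
  GRing.isDivringClosed.Build D (@central C D) (@central_divring C D).

Definition Zc (C : fieldType) (D : unitAlgType C)
  (H : forall d : D, d != 0 -> d \is a GRing.unit) := {d : D | central d}.

Section Z.
Variables (C : fieldType) (D : unitAlgType C)
  (H : forall d : D, d != 0 -> d \is a GRing.unit).
HB.instance Definition _ := [isSub for (@sval D (@central C D)) : Zc H -> D].
HB.instance Definition _ := [Choice of Zc H by <:].
HB.instance Definition _ := [SubChoice_isSubNzRing of Zc H by <:].
End Z.
Section Z2.
Variables (C : fieldType) (D : unitAlgType C)
  (H : forall d : D, d != 0 -> d \is a GRing.unit).
Lemma Zc_mulC : commutative (@GRing.mul (Zc H)).
Proof. move=> a b; apply: val_inj; rewrite !rmorphM /=. by move/centralP: (valP a); apply. Qed.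
End Z2.
HB.instance Definition _ C D H := GRing.PzRing_hasCommutativeMul.Build (@Zc C D H) (@Zc_mulC C D H).
HB.instance Definition _ C D H := [SubNzRing_isSubUnitRing of (@Zc C D H) by <:].
Section Z3.
Variables (C : fieldType) (D : unitAlgType C)
  (H : forall d : D, d != 0 -> d \is a GRing.unit).
Lemma Zc_field : GRing.field_axiom (Zc H).
Proof.
move=> x nz; have hx : val x != 0.
  by apply: contra nz => /eqP h; apply/eqP/val_inj; rewrite h rmorph0.
have := H hx. by [].
Qed.
End Z3.
HB.instance Definition _ C D H := GRing.ComUnitRing_isField.Build (@Zc C D H) (@Zc_field C D H).

Local Open Scope complex_scope.
Section XI.
Variable R : realType.

Lemma cis_mul (a b : R) :
  (cos a +i* sin a) * (cos b +i* sin b) = cos (a + b) +i* sin (a + b).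
Proof.
by rewrite cosD sinD; apply/eqP; rewrite eq_complex /= eqxx /= addrC eqxx.
Qed.

Lemma xi_exp (N n : nat) : xi R N ^+ n = cos (pi / N%:R *+ n) +i* sin (pi / N%:R *+ n).
Proof.
elim: n => [|n ih]; first by rewrite expr0 mulr0n cos0 sin0.
by rewrite exprS ih /xi cis_mul mulrS.
Qed.

Lemma xiN (N : nat) : (0 < N)%N -> xi R N ^+ N = -1.
Proof.
move=> N0; rewrite xi_exp -mulr_natr divfK ?pnatr_eq0 -?lt0n // cospi sinpi.
by apply/eqP; rewrite eq_complex /= !eqxx oppr0 eqxx.
Qed.


Lemma xi2_prim (N : nat) k : (0 < k < N)%N -> (xi R N ^+ 2) ^+ k != 1.
Proof.
case/andP => k0 kN.
have hs : 0 < sin (pi / N%:R *+ k : R).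
  have N0 : (0 < N)%N by apply: ltn_trans kN.
  have p0 : 0 < pi / N%:R :> R by rewrite divr_gt0 ?pi_gt0 ?ltr0n.
  apply: sin_gt0_pi; rewrite pmulrn_lgt0 //=.
  have e : pi / N%:R *+ N = pi :> R by rewrite -mulr_natr divfK // pnatr_eq0 -lt0n.
  by rewrite p0 /= -[X in _ *+ k < X]e ltr_pMn2l.
rewrite -exprM mulnC exprM sqrf_eq1 xi_exp negb_or; apply/andP; split.
  apply/eqP => /(congr1 (@complex.Im R)) /= => h; by rewrite h Order.POrderTheory.ltxx in hs.
apply/eqP => /(congr1 (@complex.Im R)) /= => h; by rewrite h oppr0 Order.POrderTheory.ltxx in hs.
Qed.
End XI.

Local Close Scope complex_scope.
Lemma commC (T : ringType) (a b : T) : GRing.comm a b -> GRing.comm b a.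
Proof. by []. Qed.

Lemma comm_intpow (T : unitRingType) (d g : T) (a : int) :
  GRing.comm d g -> GRing.comm d (g ^ a).
Proof. by case: a => n h /=; [apply: commrX | apply/commrV/commrX]. Qed.

Lemma key3 (F : fieldType) (k : bool) (X1 Y1 X2 Y2 a b : F) : X1 != 0 -> Y2 != 0 -> b != 0 ->
 (-1)^+k * ((Y1 * a + (-1)^+k * (- (-1)^+k * (Y1 * X1))) * (- (-1)^+k * (Y2^-1 * X2) + (-1)^+k * (Y2^-1 / b))) + X1 = X1 * (1 + X1^-1 * (Y1 / Y2) * (X1 - a) * (X2 - b^-1)).
Proof. move=> *; case: k; rewrite ?expr0 ?expr1; field; by repeat (apply/andP; split). Qed.

Section Keys.
Variables (F : fieldType) (X1 Y1 X2 Y2 a b : F).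
Local Notation G := (1 + X1^-1 * (Y1 / Y2) * (X1 - a) * (X2 - b^-1)).
Local Notation A := (Y2^-1 + (Y1^-1 - Y2^-1 / b) * X2^-1).
Local Notation B := (a / b * Y1 + (Y2 - Y1 / b) * X1).
Ltac sides := by repeat (apply/andP; split).

Lemma key4 (g : F) : X1 != 0 -> g != 0 -> (X1 * g)^-1 * (X1 * X2) = X2 * g^-1.
Proof. move=> *; field; sides. Qed.

Lemma key5 (k : bool) : X2 != 0 -> Y1 != 0 -> Y2 != 0 -> b != 0 ->
  Y2^-1 + (-1)^+k * (b^-1 * (- (-1)^+k * (Y2^-1 * X2^-1))) + Y1^-1 * X2^-1 = A.
Proof. move=> *; case: k; rewrite ?expr0 ?expr1; field; sides. Qed.

Lemma key6 (k : bool) : b != 0 ->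
  a * b^-1 * Y1 + (-1)^+k * (b^-1 * (- (-1)^+k * (Y1 * X1))) + Y2 * X1 = B.
Proof. move=> *; case: k; rewrite ?expr0 ?expr1; field; sides. Qed.

Hypotheses (h1 : X1 != 0) (h2 : X2 != 0) (h3 : Y1 != 0) (h4 : Y2 != 0) (h5 : b != 0)
  (hG : G != 0) (hA : A != 0) (hB : B != 0).

Lemma nG : X1 * Y2 * b + Y1 * (X1 - a) * (X2 * b - 1) != 0.
Proof.
have e : G = (X1 * Y2 * b + Y1 * (X1 - a) * (X2 * b - 1)) / (X1 * Y2 * b) by field; sides.
by apply: contraNneq hG => h; rewrite e h mul0r.
Qed.
Lemma nA : Y1 * b * X2 + (Y2 * b + -1 * Y1) != 0.
Proof.
have e : A = (Y1 * b * X2 + (Y2 * b + -1 * Y1)) / (Y1 * Y2 * b * X2) by field; sides.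
by apply: contraNneq hA => h; rewrite e h mul0r.
Qed.
Lemma nB : a * Y1 + (Y2 * b - Y1) * X1 != 0.
Proof.
have e : B = (a * Y1 + (Y2 * b - Y1) * X1) / b by field; sides.
by apply: contraNneq hB => h; rewrite e h mul0r.
Qed.

Lemma key7 : 1 + (X2 * G^-1)^-1 * (A^-1 * B^-1) * (X1 * G - a) * (X2 * G^-1 - b^-1) = G.
Proof. have := nG; have := nA; have := nB => *; field; sides. Qed.
Lemma key9 : a * b^-1 * B^-1 + ((A^-1)^-1 - a * B^-1) * (X2 * G^-1) = Y1^-1.
Proof. have := nG; have := nA; have := nB => *; field; sides. Qed.
Lemma key10 : A^-1 + (B - a * A^-1) * (X1 * G)^-1 = Y2.
Proof. have := nG; have := nA; have := nB => *; field; sides. Qed.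
End Keys.

Section Main.
Variables (R : realType) (N : nat).
Hypothesis hN : (2 <= N)%N.
Variables (D : unitAlgType R[i]) (x1 y1 z1 x2 y2 z2 : D).
Hypothesis hD : is_Div_W2 x1 y1 z1 x2 y2 z2 (xi R N).
Variables (RW : {lrmorphism D -> D}) (RWinv : D -> D).
Hypotheses (hRl : cancel RW RWinv) (hRr : cancel RWinv RW).
Hypothesis hRW : RW_on_generators x1 y1 z1 x2 y2 z2 RW.

Local Notation q := (xi R N).
Local Notation zt := (xi R N ^+ 2).

Lemma hdiv : forall d : D, d != 0 -> d \is a GRing.unit.
Proof. by case: hD. Qed.
Lemma hrel : W2_relations x1 y1 z1 x2 y2 z2 q.
Proof. by case: hD. Qed.

Lemma units : [&& x1 \is a GRing.unit, y1 \is a GRing.unit, z1 \is a GRing.unit,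
  x2 \is a GRing.unit, y2 \is a GRing.unit & z2 \is a GRing.unit].
Proof. by case: hrel => hu _ _ _ _; move: hu => /=; rewrite andbT. Qed.
Lemma ux1 : x1 \is a GRing.unit. Proof. by case/and5P: units. Qed.
Lemma uy1 : y1 \is a GRing.unit. Proof. by case/and5P: units. Qed.
Lemma uz1 : z1 \is a GRing.unit. Proof. by case/and5P: units. Qed.
Lemma ux2 : x2 \is a GRing.unit. Proof. by case/and5P: units. Qed.
Lemma uy2 : y2 \is a GRing.unit. Proof. by case/and5P: units => _ _ _ _ /andP []. Qed.
Lemma uz2 : z2 \is a GRing.unit. Proof. by case/and5P: units => _ _ _ _ /andP []. Qed.

Lemma qy1x1 : qc zt y1 x1. Proof. by case: hrel. Qed.
Lemma qy2x2 : qc zt y2 x2. Proof. by case: hrel. Qed.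
Lemma cx1x2 : GRing.comm x1 x2. Proof. by case: hrel => _ _ _ []. Qed.
Lemma cx1y2 : GRing.comm x1 y2. Proof. by case: hrel => _ _ _ []. Qed.
Lemma cy1x2 : GRing.comm y1 x2. Proof. by case: hrel => _ _ _ []. Qed.
Lemma cy1y2 : GRing.comm y1 y2. Proof. by case: hrel => _ _ _ []. Qed.
Lemma cz1 g : g \in [:: x1; y1; z1; x2; y2; z2] -> GRing.comm z1 g.
Proof. by case: hrel => _ _ _ _ h /h []. Qed.
Lemma cz2 g : g \in [:: x1; y1; z1; x2; y2; z2] -> GRing.comm z2 g.
Proof. by case: hrel => _ _ _ _ h /h []. Qed.

Lemma central_gens d : GRing.comm d x1 -> GRing.comm d y1 -> GRing.comm d z1 ->
  GRing.comm d x2 -> GRing.comm d y2 -> GRing.comm d z2 -> central d.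
Proof.
move=> h1 h2 h3 h4 h5 h6.
have hW p : inW x1 y1 z1 x2 y2 z2 p -> GRing.comm d p.
  case=> s [c ->]; apply: commr_sum => m _.
  have hm : GRing.comm d (mono x1 y1 z1 x2 y2 z2 m).
    case: m => [[[[[a b] c'] d'] e'] f] /=.
    by repeat apply: commrM; apply: comm_intpow.
  rewrite /GRing.comm -scalerAr -scalerAl; congr (_ *: _); exact: hm.
apply/centralP => e; case: hD => _ _ _ /(_ e) [p [s [hp hs _ ->]]].
by apply: commrM; [apply: hW | apply/commrV/hW].
Qed.

Local Notation Z := (Zc hdiv).
Definition cz (d : D) : Z := insubd 0 d.
Lemma czK d : central d -> val (cz d) = d.
Proof. by move=> h; rewrite /cz insubdK. Qed.

Lemma N0 : (0 < N)%N. Proof. exact: ltn_trans hN. Qed.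
Lemma q_N : q ^+ N = -1. Proof. exact: xiN N0. Qed.
Lemma zt_N : zt ^+ N = 1.
Proof. by rewrite -exprM mulnC exprM q_N sqrrN expr1n. Qed.
Lemma zt_prim k : (0 < k < N)%N -> zt ^+ k != 1.
Proof. exact: xi2_prim. Qed.
Lemma zt_neq0 : zt != 0.
Proof. by apply/eqP => h; move: zt_N; rewrite h expr0n eqn0Ngt N0 => /eqP; rewrite eq_sym oner_eq0. Qed.
Lemma ztV_N : zt^-1 ^+ N = 1.
Proof. by rewrite exprVn zt_N invr1. Qed.

Lemma bin2_double n : ('C(n, 2) * 2 = n * n.-1)%N.
Proof.
elim: n => [//|n ih]; rewrite binS bin1 mulnDl ih.
by case: n {ih} => [//|n] /=; rewrite !mulSn !mulnS; lia.
Qed.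

Lemma sgC : zt ^+ 'C(N, 2) = (-1) ^+ N.-1.
Proof. by rewrite -exprM mulnC bin2_double exprM q_N. Qed.
Lemma sgCV : zt^-1 ^+ 'C(N, 2) = (-1) ^+ N.-1.
Proof. by rewrite exprVn sgC invr_sign. Qed.

Lemma signZ n (x : D) : ((-1) ^+ n : R[i]) *: x = (-1) ^+ n * x.
Proof.
elim: n => [|n ih]; first by rewrite !expr0 scale1r mul1r.
by rewrite !exprS -scalerA ih scaleN1r !mulN1r mulNr.
Qed.

Lemma binZ (u v : D) : qc zt u v -> (u + v) ^+ N = u ^+ N + v ^+ N.
Proof. by move=> h; apply: (qc_binom zt_N zt_prim N0 h). Qed.

Lemma comm_pow (w : R[i]) (a g : D) : qc w a g -> w ^+ N = 1 -> GRing.comm (a ^+ N) g.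
Proof. by move=> h e; apply: qc_commE; rewrite -e; apply: qcX_l. Qed.
Lemma comm_powc (a g : D) : GRing.comm a g -> GRing.comm (a ^+ N) g.
Proof. by move=> h; apply/commC/commrX/commC. Qed.

Ltac memt := by rewrite !inE eqxx ?orbT.
Lemma cz1x1 : GRing.comm z1 x1. Proof. apply: cz1; memt. Qed.
Lemma cz1y1 : GRing.comm z1 y1. Proof. apply: cz1; memt. Qed.
Lemma cz1x2 : GRing.comm z1 x2. Proof. apply: cz1; memt. Qed.
Lemma cz1y2 : GRing.comm z1 y2. Proof. apply: cz1; memt. Qed.
Lemma cz1z2 : GRing.comm z1 z2. Proof. apply: cz1; memt. Qed.
Lemma cz2x1 : GRing.comm z2 x1. Proof. apply: cz2; memt. Qed.
Lemma cz2y1 : GRing.comm z2 y1. Proof. apply: cz2; memt. Qed.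
Lemma cz2x2 : GRing.comm z2 x2. Proof. apply: cz2; memt. Qed.
Lemma cz2y2 : GRing.comm z2 y2. Proof. apply: cz2; memt. Qed.

Lemma cen_x1 : central (x1 ^+ N).
Proof.
apply: central_gens.
- exact: comm_powc.
- by apply: (comm_pow (qc_sym zt_neq0 qy1x1)); rewrite exprVn zt_N invr1.
- exact/comm_powc/commC/cz1x1.
- exact/comm_powc/cx1x2.
- exact/comm_powc/cx1y2.
- exact/comm_powc/commC/cz2x1.
Qed.
Lemma cen_y1 : central (y1 ^+ N).
Proof.
apply: central_gens.
- exact: (comm_pow qy1x1 zt_N).
- exact: comm_powc.
- exact/comm_powc/commC/cz1y1.
- exact/comm_powc/cy1x2.
- exact/comm_powc/cy1y2.
- exact/comm_powc/commC/cz2y1.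
Qed.
Lemma cen_x2 : central (x2 ^+ N).
Proof.
apply: central_gens.
- exact/comm_powc/commC/cx1x2.
- exact/comm_powc/commC/cy1x2.
- exact/comm_powc/commC/cz1x2.
- exact: comm_powc.
- by apply: (comm_pow (qc_sym zt_neq0 qy2x2)); rewrite exprVn zt_N invr1.
- exact/comm_powc/commC/cz2x2.
Qed.
Lemma cen_y2 : central (y2 ^+ N).
Proof.
apply: central_gens.
- exact/comm_powc/commC/cx1y2.
- exact/comm_powc/commC/cy1y2.
- exact/comm_powc/commC/cz1y2.
- exact: (comm_pow qy2x2 zt_N).
- exact: comm_powc.
- exact/comm_powc/commC/cz2y2.
Qed.
Lemma cen_z1 : central z1.
Proof.
apply: central_gens => //; [exact: cz1x1|exact: cz1y1|exact: cz1x2|exact: cz1y2|exact: cz1z2].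
Qed.
Lemma cen_z2 : central z2.
Proof.
apply: central_gens => //; [exact: cz2x1|exact: cz2y1|exact/commC/cz1z2|exact: cz2x2|exact: cz2y2].
Qed.

Definition X1 := cz (x1 ^+ N).
Definition Y1 := cz (y1 ^+ N).
Definition X2 := cz (x2 ^+ N).
Definition Y2 := cz (y2 ^+ N).
Definition Z1 := cz z1.
Definition Z2 := cz z2.
Lemma vX1 : val X1 = x1 ^+ N. Proof. exact: czK cen_x1. Qed.
Lemma vY1 : val Y1 = y1 ^+ N. Proof. exact: czK cen_y1. Qed.
Lemma vX2 : val X2 = x2 ^+ N. Proof. exact: czK cen_x2. Qed.
Lemma vY2 : val Y2 = y2 ^+ N. Proof. exact: czK cen_y2. Qed.
Lemma vZ1 : val Z1 = z1. Proof. exact: czK cen_z1. Qed.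
Lemma vZ2 : val Z2 = z2. Proof. exact: czK cen_z2. Qed.


Lemma commMl (a b c : D) : GRing.comm a c -> GRing.comm b c -> GRing.comm (a * b) c.
Proof. by move=> h1 h2; apply/commC/commrM; apply/commC. Qed.
Lemma commBl (a b c : D) : GRing.comm a c -> GRing.comm b c -> GRing.comm (a - b) c.
Proof. by move=> h1 h2; apply/commC/commrB; apply/commC. Qed.
Lemma commVl (a c : D) : GRing.comm a c -> GRing.comm a^-1 c.
Proof. by move=> h1; apply/commC/commrV/commC. Qed.

Lemma RX1_D : RW (x1 ^+ N) = (-1) ^+ N * ((y1 ^+ N * z1 ^+ N + (-1) ^+ N * ((-1) ^+ N.-1 * (y1 ^+ N * x1 ^+ N)))
   * ((-1) ^+ N.-1 * (y2 ^- N * x2 ^+ N) + (-1) ^+ N * (y2 ^- N * z2 ^- N))) + x1 ^+ N.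
Proof.
case: hRW => _ hx1 _ _ _.
have -> : RW (x1 ^+ N) = (RW x1) ^+ N by exact: rmorphXn.
rewrite hx1 /gW.
set m1 := y1 * (z1 - x1); set m2 := y2^-1 * (x2 - z2^-1).
have e1 : x1 * (1 - x1^-1 * y1 * (z1 - x1) * y2^-1 * (x2 - z2^-1)) = - (m1 * m2) + x1.
  by rewrite mulrBr mulr1 !mulrA (mulrV ux1) mul1r addrC.
have q1 : qc zt (- (m1 * m2)) x1.
  apply: qcN_l; apply: (qcW (w := zt * 1 * (1 * 1))); last by rewrite !(mul1r, mulr1).
  apply: qcM_l; first apply: qcM_l.
  - exact: qy1x1.
  - by apply: qcB_l; apply: qc_comm; [exact: cz1x1 | exact: commr_refl].
  apply: qcM_l; apply: qc_comm.
  - exact: commVl (commC cx1y2).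
  - by apply: commBl; [exact: commC cx1x2 | exact: commVl cz2x1].
have cm12 : GRing.comm m1 m2.
  apply: commMl.
  - apply: commrM; first exact: commrV cy1y2.
    by apply: commrB; [exact: cy1x2 | exact: commrV (commC cz2y1)].
  apply: commBl.
  - apply: commrM; first exact: commrV cz1y2.
    by apply: commrB; [exact: cz1x2 | exact: commrV cz1z2].
  - apply: commrM; first exact: commrV cx1y2.
    by apply: commrB; [exact: cx1x2 | exact: commrV (commC cz2x1)].
have em1 : m1 ^+ N = y1 ^+ N * z1 ^+ N + (-1) ^+ N * ((-1) ^+ N.-1 * (y1 ^+ N * x1 ^+ N)).
  have q2 : qc zt (y1 * z1) (- (y1 * x1)).
    apply: qcN_r; apply: (qcW (w := 1 * zt * (1 * 1))); last by rewrite !(mul1r, mulr1).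
    apply: qcM_l; apply: qcM_r.
    - exact: qc_comm (commr_refl y1).
    - exact: qy1x1.
    - exact: qc_comm cz1y1.
    - exact: qc_comm cz1x1.
  rewrite /m1 mulrBr (binZ q2) (exprMn_comm _ (commC cz1y1)) [(- (y1 * x1)) ^+ N]exprNn (qc_prod_pow _ qy1x1).
  by rewrite sgC signZ.
have em2 : m2 ^+ N = (-1) ^+ N.-1 * (y2 ^- N * x2 ^+ N) + (-1) ^+ N * (y2 ^- N * z2 ^- N).
  have cyz : GRing.comm y2^-1 z2^-1 by exact: commrV (commC (commrV cz2y2)).
  have q3 : qc zt (y2^-1 * x2) (- (y2^-1 * z2^-1)).
    apply: qcN_r; apply: (qcW (w := 1 * (zt * 1))); last by rewrite !(mul1r, mulr1).
    apply: qcM_l; first by apply/qc_comm/commrM; [exact: commr_refl | exact: cyz].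
    apply: qcM_r; last exact: qc_comm (commrV (commC cz2x2)).
    rewrite -[zt]invrK; apply: qcV_r; first by rewrite invr_eq0 zt_neq0.
      exact: uy2.
    exact: qc_sym zt_neq0 qy2x2.
  rewrite /m2 mulrBr (binZ q3) [(- (y2^-1 * z2^-1)) ^+ N]exprNn (exprMn_comm _ cyz).
  rewrite (qc_prod_pow _ (qcV_l zt_neq0 uy2 qy2x2)) sgCV signZ !exprVn.
  by [].
by rewrite e1 (binZ q1) [(- (m1 * m2)) ^+ N]exprNn (exprMn_comm _ cm12) em1 em2.
Qed.


Lemma svX1 : sval X1 = x1 ^+ N. Proof. exact: vX1. Qed.
Lemma svY1 : sval Y1 = y1 ^+ N. Proof. exact: vY1. Qed.
Lemma svX2 : sval X2 = x2 ^+ N. Proof. exact: vX2. Qed.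
Lemma svY2 : sval Y2 = y2 ^+ N. Proof. exact: vY2. Qed.
Lemma svZ1 : sval Z1 = z1. Proof. exact: vZ1. Qed.
Lemma svZ2 : sval Z2 = z2. Proof. exact: vZ2. Qed.
Lemma svZ1N : sval (Z1 ^+ N) = z1 ^+ N.
Proof. by change (val (Z1 ^+ N : Z) = z1 ^+ N); rewrite rmorphXn /= svZ1. Qed.
Lemma svZ2N : sval (Z2 ^+ N) = z2 ^+ N.
Proof. by change (val (Z2 ^+ N : Z) = z2 ^+ N); rewrite rmorphXn /= svZ2. Qed.
Lemma svS : sval ((-1) ^+ N : Z) = (-1) ^+ N.
Proof. by change (val ((-1) ^+ N : Z) = (-1) ^+ N); rewrite rmorph_sign. Qed.
Lemma svS1 : sval ((-1) ^+ N.-1 : Z) = (-1) ^+ N.-1.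
Proof. by change (val ((-1) ^+ N.-1 : Z) = (-1) ^+ N.-1); rewrite rmorph_sign. Qed.
Ltac push := rewrite /= ?svX1 ?svY1 ?svX2 ?svY2 ?svZ1 ?svZ2 ?svZ1N ?svZ2N ?svS ?svS1.

Lemma nzZ (a : Z) (d : D) : val a = d -> d \is a GRing.unit -> a != 0.
Proof. by move=> <- h; apply/negP => /eqP a0; move: h; rewrite a0 rmorph0 unitr0. Qed.
Lemma nzX1 : X1 != 0. Proof. by apply: (nzZ vX1); rewrite unitrX ?ux1. Qed.
Lemma nzY1 : Y1 != 0. Proof. by apply: (nzZ vY1); rewrite unitrX ?uy1. Qed.
Lemma nzX2 : X2 != 0. Proof. by apply: (nzZ vX2); rewrite unitrX ?ux2. Qed.
Lemma nzY2 : Y2 != 0. Proof. by apply: (nzZ vY2); rewrite unitrX ?uy2. Qed.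
Lemma nzZ1 : Z1 != 0. Proof. by apply: (nzZ vZ1); rewrite ?uz1. Qed.
Lemma nzZ2 : Z2 != 0. Proof. by apply: (nzZ vZ2); rewrite ?uz2. Qed.

Lemma sgN1 (T : pzRingType) : (-1) ^+ N.-1 = - ((-1) ^+ N) :> T.
Proof. by case: N N0 => // n _; rewrite exprS mulN1r opprK. Qed.

Definition GZ : Z := 1 + X1^-1 * (Y1 / Y2) * (X1 - Z1 ^+ N) * (X2 - Z2 ^- N).
Lemma vG : val GZ = GW x1 y1 z1 x2 y2 z2 N.
Proof. by rewrite /GZ /GW; push. Qed.

Lemma claim3 : RW (x1 ^+ N) = x1 ^+ N * GW x1 y1 z1 x2 y2 z2 N.
Proof.
pose LZ : Z := (-1) ^+ N * ((Y1 * Z1 ^+ N + (-1) ^+ N * ((-1) ^+ N.-1 * (Y1 * X1)))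
   * ((-1) ^+ N.-1 * (Y2^-1 * X2) + (-1) ^+ N * (Y2^-1 * Z2 ^- N))) + X1.
have hL : val LZ = (-1) ^+ N * ((y1 ^+ N * z1 ^+ N + (-1) ^+ N * ((-1) ^+ N.-1 * (y1 ^+ N * x1 ^+ N)))
   * ((-1) ^+ N.-1 * (y2 ^- N * x2 ^+ N) + (-1) ^+ N * (y2 ^- N * z2 ^- N))) + x1 ^+ N.
  by rewrite /LZ; push.
have hR : val (X1 * GZ) = x1 ^+ N * GW x1 y1 z1 x2 y2 z2 N.
  by rewrite -vG; push.
rewrite RX1_D -hL -hR; congr val.
rewrite /LZ /GZ !sgN1 -signr_odd.
by apply: key3; rewrite ?nzX1 ?nzY2 // expf_neq0 // ?nzZ2.
Qed.


Lemma RY1_D : RW (y1 ^- N) = y2 ^- N + (-1) ^+ N * (z2 ^- N * ((-1) ^+ N.-1 * (y2 ^- N * x2 ^- N)))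
   + y1 ^- N * x2 ^- N.
Proof.
case: hRW => _ _ _ hy1 _.
rewrite -exprVn.
have -> : RW (y1^-1 ^+ N) = (RW y1^-1) ^+ N by exact: rmorphXn.
rewrite hy1.
set a := y2^-1 - z2^-1 * (y2^-1 * x2^-1); set b := y1^-1 * x2^-1.
have e1 : y2^-1 + (y1^-1 - z2^-1 * y2^-1) * x2^-1 = a + b.
  by rewrite /a /b mulrBl -[z2^-1 * y2^-1 * x2^-1]mulrA [y1^-1 * x2^-1 - _]addrC addrA.
have qyx : qc zt y2^-1 x2^-1.
  rewrite -[zt]invrK; apply: qcV_r; first by rewrite invr_eq0 zt_neq0.
    exact: ux2.
  exact: qcV_l zt_neq0 uy2 qy2x2.
have cy2y1 : GRing.comm y2^-1 y1^-1 by exact: commrV (commVl (commC cy1y2)).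
have cz2y1 : GRing.comm z2^-1 y1^-1 by exact: commrV (commVl cz2y1).
have cz2x2' : GRing.comm z2^-1 x2^-1 by exact: commrV (commVl cz2x2).
have cz2y2' : GRing.comm z2^-1 y2^-1 by exact: commrV (commVl cz2y2).
have qb : qc zt a b.
  apply: qcB_l.
    apply: (qcW (w := 1 * zt)); last by rewrite mul1r.
    by apply: qcM_r; [exact: qc_comm cy2y1 | exact: qyx].
  apply: (qcW (w := 1 * ((1 * zt) * 1))); last by rewrite !(mul1r, mulr1).
  apply: qcM_l; first by apply: qc_comm; apply: commrM.
  apply: qcM_l; first by apply: qcM_r; [exact: qc_comm cy2y1 | exact: qyx].
  by apply: qc_comm; apply: commrM; [exact: commrV (commVl (commC cy1x2)) | exact: commr_refl].
have qa : qc zt y2^-1 (- (z2^-1 * (y2^-1 * x2^-1))).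
  apply: qcN_r; apply: (qcW (w := 1 * (1 * zt))); last by rewrite !mul1r.
  apply: qcM_r; first exact: qc_comm (commC cz2y2').
  by apply: qcM_r; [exact: qc_comm (commr_refl _) | exact: qyx].
have cz2m : GRing.comm z2^-1 (y2^-1 * x2^-1) by apply: commrM.
rewrite e1 (binZ qb) (binZ qa) [(- (z2^-1 * _)) ^+ N]exprNn (exprMn_comm _ cz2m).
rewrite (qc_prod_pow _ qyx) sgC signZ /b (exprMn_comm _ (commrV (commVl cy1x2))).
by rewrite !exprVn.
Qed.

Lemma RY2_D : RW (y2 ^+ N) = z1 ^+ N * z2 ^- N * y1 ^+ N
   + (-1) ^+ N * (z2 ^- N * ((-1) ^+ N.-1 * (y1 ^+ N * x1 ^+ N))) + y2 ^+ N * x1 ^+ N.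
Proof.
case: hRW => _ _ _ _ hy2.
have -> : RW (y2 ^+ N) = (RW y2) ^+ N by exact: rmorphXn.
rewrite hy2.
set a := z1 / z2 * y1 - z2^-1 * (y1 * x1); set b := y2 * x1.
have e1 : z1 / z2 * y1 + (y2 - z2^-1 * y1) * x1 = a + b.
  by rewrite /a /b mulrBl -[z2^-1 * y1 * x1]mulrA [y2 * x1 - _]addrC addrA.
have cz2y1' : GRing.comm z2^-1 y1 by exact: commVl cz2y1.
have cz2x1' : GRing.comm z2^-1 x1 by exact: commVl cz2x1.
have cz2y2' : GRing.comm z2^-1 y2 by exact: commVl cz2y2.
have qy1b : qc zt y1 b.
  apply: (qcW (w := 1 * zt)); last by rewrite mul1r.
  by apply: qcM_r; [exact: qc_comm cy1y2 | exact: qy1x1].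
have qb : qc zt a b.
  apply: qcB_l.
    apply: (qcW (w := 1 * 1 * zt)); last by rewrite !mul1r.
    apply: qcM_l; last exact: qy1b.
    apply: qcM_l; apply: qc_comm; apply: commrM.
    - exact: cz1y2.
    - exact: cz1x1.
    - exact: cz2y2'.
    - exact: cz2x1'.
  apply: (qcW (w := 1 * (zt * 1))); last by rewrite !(mul1r, mulr1).
  apply: qcM_l; first by apply: qc_comm; apply: commrM.
  apply: qcM_l; first exact: qy1b.
  by apply: qc_comm; apply: commrM; [exact: cx1y2 | exact: commr_refl].
have qa : qc zt (z1 / z2 * y1) (- (z2^-1 * (y1 * x1))).
  apply: qcN_r; apply: (qcW (w := 1 * 1 * (1 * (1 * zt)))); last by rewrite !mul1r.
  apply: qcM_l; first apply: qcM_l.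
  - apply: qc_comm; apply: commrM; first exact: commrV cz1z2.
    by apply: commrM; [exact: cz1y1 | exact: cz1x1].
  - apply: qc_comm; apply: commrM; first exact: commr_refl.
    by apply: commrM.
  apply: qcM_r; first exact: qc_comm (commC cz2y1').
  by apply: qcM_r; [exact: qc_comm (commr_refl _) | exact: qy1x1].
have cz2m : GRing.comm z2^-1 (y1 * x1) by apply: commrM.
have cz12 : GRing.comm z1 z2^-1 by exact: commrV cz1z2.
have czy : GRing.comm (z1 / z2) y1 by apply: commMl; [exact: cz1y1 | exact: cz2y1'].
rewrite e1 (binZ qb) (binZ qa) [(- (z2^-1 * _)) ^+ N]exprNn (exprMn_comm _ cz2m).
rewrite (qc_prod_pow _ qy1x1) sgC signZ /b (exprMn_comm _ (commC cx1y2)).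
by rewrite (exprMn_comm _ czy) (exprMn_comm _ cz12) !exprVn.
Qed.


Lemma RWD (a b : D) : RW (a + b) = RW a + RW b. Proof. exact: rmorphD. Qed.
Lemma RWN (a : D) : RW (- a) = - RW a. Proof. exact: rmorphN. Qed.
Lemma RWB (a b : D) : RW (a - b) = RW a - RW b. Proof. exact: rmorphB. Qed.
Lemma RWM (a b : D) : RW (a * b) = RW a * RW b. Proof. exact: rmorphM. Qed.
Lemma RW1 : RW 1 = 1. Proof. exact: rmorph1. Qed.
Lemma RWX (a : D) n : RW (a ^+ n) = RW a ^+ n. Proof. exact: rmorphXn. Qed.
Lemma RW0 : RW 0 = 0. Proof. exact: rmorph0. Qed.
Lemma RWV (a : D) : RW (a^-1) = (RW a)^-1.
Proof.
have [->|a0] := eqVneq a 0; first by rewrite invr0 RW0 invr0.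
exact: (rmorphV RW (hdiv a0)).
Qed.
Lemma RW_nz (a : D) : a != 0 -> RW a != 0.
Proof.
move=> an; apply/eqP => h; move/eqP: an; apply; by rewrite -(hRl a) h -{1}RW0 hRl.
Qed.
Lemma unitN (a : D) : a != 0 -> a \is a GRing.unit. Proof. exact: hdiv. Qed.

Definition AZ : Z := Y2^-1 + (Y1^-1 - Y2^-1 / Z2 ^+ N) * X2^-1.
Definition BZ : Z := Z1 ^+ N / Z2 ^+ N * Y1 + (Y2 - Y1 / Z2 ^+ N) * X1.
Lemma vA : val AZ = y2 ^- N + (y1 ^- N - y2 ^- N / z2 ^+ N) * x2 ^- N.
Proof. by rewrite /AZ; push. Qed.
Lemma vB : val BZ = z1 ^+ N / z2 ^+ N * y1 ^+ N + (y2 ^+ N - y1 ^+ N / z2 ^+ N) * x1 ^+ N.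
Proof. by rewrite /BZ; push. Qed.

Lemma nzZ2N : Z2 ^+ N != 0. Proof. by rewrite expf_neq0 // nzZ2. Qed.

Lemma claim5 : RW (y1 ^- N) = y2 ^- N + (y1 ^- N - y2 ^- N / z2 ^+ N) * x2 ^- N.
Proof.
pose LZ : Z := Y2^-1 + (-1) ^+ N * (Z2 ^- N * ((-1) ^+ N.-1 * (Y2^-1 * X2^-1))) + Y1^-1 * X2^-1.
have hL : val LZ = y2 ^- N + (-1) ^+ N * (z2 ^- N * ((-1) ^+ N.-1 * (y2 ^- N * x2 ^- N)))
   + y1 ^- N * x2 ^- N by rewrite /LZ; push.
rewrite RY1_D -hL -vA; congr val.
rewrite /LZ /AZ !sgN1 -signr_odd.
by apply: key5; rewrite ?nzX2 ?nzY1 ?nzY2 ?nzZ2N.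
Qed.

Lemma claim6 : RW (y2 ^+ N) = z1 ^+ N / z2 ^+ N * y1 ^+ N + (y2 ^+ N - y1 ^+ N / z2 ^+ N) * x1 ^+ N.
Proof.
pose LZ : Z := Z1 ^+ N * Z2 ^- N * Y1 + (-1) ^+ N * (Z2 ^- N * ((-1) ^+ N.-1 * (Y1 * X1))) + Y2 * X1.
have hL : val LZ = z1 ^+ N * z2 ^- N * y1 ^+ N
   + (-1) ^+ N * (z2 ^- N * ((-1) ^+ N.-1 * (y1 ^+ N * x1 ^+ N))) + y2 ^+ N * x1 ^+ N
  by rewrite /LZ; push.
rewrite RY2_D -hL -vB; congr val.
rewrite /LZ /BZ !sgN1 -signr_odd.
by apply: key6; rewrite ?nzZ2N.
Qed.

Lemma uGW : GW x1 y1 z1 x2 y2 z2 N \is a GRing.unit.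
Proof.
have u : RW (x1 ^+ N) \is a GRing.unit by apply: rmorph_unit; rewrite unitrX // ux1.
by move: u; rewrite claim3 unitrMr // unitrX // ux1.
Qed.
Lemma nzG : GZ != 0. Proof. exact: nzZ vG uGW. Qed.
Lemma nz_of_unit (a : D) : a \is a GRing.unit -> a != 0.
Proof. by apply: contraTneq => ->; rewrite unitr0. Qed.
Lemma nzA : AZ != 0.
Proof.
apply: (nzZ vA); rewrite -claim5; apply/unitN/RW_nz/nz_of_unit.
by rewrite unitrV unitrX // uy1.
Qed.
Lemma nzB : BZ != 0.
Proof.
apply: (nzZ vB); rewrite -claim6; apply/unitN/RW_nz/nz_of_unit.
by rewrite unitrX // uy2.
Qed.

Lemma claim4 : RW (x2 ^+ N) = x2 ^+ N * (GW x1 y1 z1 x2 y2 z2 N)^-1.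
Proof.
have ug : gW x1 y1 z1 x2 y2 z2 \is a GRing.unit.
  have u : RW x1 \is a GRing.unit by apply: rmorph_unit; exact: ux1.
  by move: u; case: hRW => _ -> _ _ _; rewrite unitrMr // ux1.
have h12 : RW (x1 * x2) = x1 * x2.
  by rewrite RWM; case: hRW => _ -> -> _ _; rewrite -mulrA [gW _ _ _ _ _ _ * _]mulrA mulrV // mul1r.
have e : RW (x1 ^+ N) * RW (x2 ^+ N) = x1 ^+ N * x2 ^+ N.
  by rewrite -RWM -(exprMn_comm _ cx1x2) RWX h12.
have u : RW (x1 ^+ N) \is a GRing.unit by apply: rmorph_unit; rewrite unitrX // ux1.
have -> : RW (x2 ^+ N) = (RW (x1 ^+ N))^-1 * (x1 ^+ N * x2 ^+ N) by rewrite -e mulKr.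
rewrite claim3 -vG.
have hL : val ((X1 * GZ)^-1 * (X1 * X2)) = (x1 ^+ N * val GZ)^-1 * (x1 ^+ N * x2 ^+ N) by push.
have hR : val (X2 * GZ^-1) = x2 ^+ N * (val GZ)^-1 by push.
rewrite -hL -hR; congr val.
by apply: key4; rewrite ?nzX1 ?nzG.
Qed.

Lemma RX1p : RW (x1 ^+ N) = x1 ^+ N * val GZ. Proof. by rewrite claim3 vG. Qed.
Lemma RX2p : RW (x2 ^+ N) = x2 ^+ N * (val GZ)^-1. Proof. by rewrite claim4 vG. Qed.
Lemma RY1p : RW (y1 ^+ N) = (val AZ)^-1.
Proof. by rewrite -[y1 ^+ N]invrK RWV claim5 vA. Qed.
Lemma RY2p : RW (y2 ^+ N) = val BZ. Proof. by rewrite claim6 vB. Qed.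
Lemma RZ1p : RW (z1 ^+ N) = z1 ^+ N. Proof. by rewrite RWX; case: hRW => [[-> _]]. Qed.
Lemma RZ2p : RW (z2 ^+ N) = z2 ^+ N. Proof. by rewrite RWX; case: hRW => [[_ ->]]. Qed.

Lemma uvG : val GZ \is a GRing.unit. Proof. by rewrite vG uGW. Qed.

Lemma rGt : RW (GWt x1 y1 z1 x2 y2 z2 N) = val GZ.
Proof.
rewrite /GWt !(RWD, RWN, RWM, RWV, RW1) RX1p RX2p RY1p RY2p RZ1p RZ2p.
pose LZ : Z := 1 + (X2 * GZ^-1)^-1 * (AZ^-1 * BZ^-1) * (X1 * GZ - Z1 ^+ N) * (X2 * GZ^-1 - (Z2 ^+ N)^-1).
have hL : val LZ = 1 + (x2 ^+ N * (val GZ)^-1)^-1 * ((val AZ)^-1 * (val BZ)^-1)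
   * (x1 ^+ N * val GZ - z1 ^+ N) * (x2 ^+ N * (val GZ)^-1 - (z2 ^+ N)^-1) by rewrite /LZ; push.
rewrite -hL; congr val.
have := nzG; have := nzA; have := nzB; rewrite /LZ /GZ /AZ /BZ => *.
by apply: key7; rewrite ?nzX1 ?nzX2 ?nzY1 ?nzY2 ?nzZ2N.
Qed.


Lemma claim7 : RWinv (x1 ^+ N) = x1 ^+ N * (GWt x1 y1 z1 x2 y2 z2 N)^-1.
Proof.
have e : RW (x1 ^+ N * (GWt x1 y1 z1 x2 y2 z2 N)^-1) = x1 ^+ N.
  by rewrite RWM RWV rGt RX1p mulrK // uvG.
by rewrite -{1}e hRl.
Qed.

Lemma claim8 : RWinv (x2 ^+ N) = x2 ^+ N * GWt x1 y1 z1 x2 y2 z2 N.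
Proof.
have e : RW (x2 ^+ N * GWt x1 y1 z1 x2 y2 z2 N) = x2 ^+ N.
  by rewrite RWM rGt RX2p mulrVK // uvG.
by rewrite -{1}e hRl.
Qed.

Lemma claim9 : RWinv (y1 ^- N) = z1 ^+ N / z2 ^+ N * y2 ^- N + (y1 ^- N - z1 ^+ N * y2 ^- N) * x2 ^+ N.
Proof.
have e : RW (z1 ^+ N / z2 ^+ N * y2 ^- N + (y1 ^- N - z1 ^+ N * y2 ^- N) * x2 ^+ N) = y1 ^- N.
  rewrite !(RWD, RWN, RWM, RWV) RX2p RY1p RY2p RZ1p RZ2p.
  pose LZ : Z := Z1 ^+ N * (Z2 ^+ N)^-1 * BZ^-1 + ((AZ^-1)^-1 - Z1 ^+ N * BZ^-1) * (X2 * GZ^-1).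
  have hL : val LZ = z1 ^+ N * (z2 ^+ N)^-1 * (val BZ)^-1
     + (((val AZ)^-1)^-1 - z1 ^+ N * (val BZ)^-1) * (x2 ^+ N * (val GZ)^-1) by rewrite /LZ; push.
  have hR : val (Y1^-1) = y1 ^- N by push.
  rewrite -hL -hR; congr val.
  have := nzG; have := nzA; have := nzB; rewrite /LZ /GZ /AZ /BZ => *.
  by apply: key9; rewrite ?nzX1 ?nzX2 ?nzY1 ?nzY2 ?nzZ2N.
by rewrite -{1}e hRl.
Qed.

Lemma claim10 : RWinv (y2 ^+ N) = y1 ^+ N + (y2 ^+ N - z1 ^+ N * y1 ^+ N) * x1 ^- N.
Proof.
have e : RW (y1 ^+ N + (y2 ^+ N - z1 ^+ N * y1 ^+ N) * x1 ^- N) = y2 ^+ N.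
  rewrite !(RWD, RWN, RWM, RWV) RX1p RY1p RY2p RZ1p.
  pose LZ : Z := AZ^-1 + (BZ - Z1 ^+ N * AZ^-1) * (X1 * GZ)^-1.
  have hL : val LZ = (val AZ)^-1 + (val BZ - z1 ^+ N * (val AZ)^-1) * (x1 ^+ N * val GZ)^-1
    by rewrite /LZ; push.
  have hR : val Y2 = y2 ^+ N by push.
  rewrite -hL -hR; congr val.
  have := nzG; have := nzA; have := nzB; rewrite /LZ /GZ /AZ /BZ => *.
  by apply: key10; rewrite ?nzX1 ?nzX2 ?nzY1 ?nzY2 ?nzZ2N.
by rewrite -{1}e hRl.
Qed.

End Main.


Unset Implicit Arguments.
Local Open Scope complex_scope.

Theorem proposition3p3 (R : realType) (N : nat) (hN : (2 <= N)%N)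
    (D : unitAlgType R[i]) (x1 y1 z1 x2 y2 z2 : D)
    (hD : is_Div_W2 x1 y1 z1 x2 y2 z2 (xi R N))
    (RW : {lrmorphism D -> D}) (RWinv : D -> D)
    (hRl : cancel RW RWinv) (hRr : cancel RWinv RW)
    (hRW : RW_on_generators x1 y1 z1 x2 y2 z2 RW) :
  let G := GW x1 y1 z1 x2 y2 z2 N in
  let Gt := GWt x1 y1 z1 x2 y2 z2 N in
  RW z1 = z1 /\ RW z2 = z2/\
      RW (x1 ^+ N) = x1 ^+ N * G/\
      RW (x2 ^+ N) = x2 ^+ N * G^-1/\
      RW (y1 ^- N) = y2 ^- N + (y1 ^- N - y2 ^- N / z2 ^+ N) * x2 ^- N/\
      RW (y2 ^+ N) = z1 ^+ N / z2 ^+ N * y1 ^+ N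
                     + (y2 ^+ N - y1 ^+ N / z2 ^+ N) * x1 ^+ N/\
      RWinv (x1 ^+ N) = x1 ^+ N * Gt^-1/\
      RWinv (x2 ^+ N) = x2 ^+ N * Gt/\
      RWinv (y1 ^- N) = z1 ^+ N / z2 ^+ N * y2 ^- N
                        + (y1 ^- N - z1 ^+ N * y2 ^- N) * x2 ^+ N /\
      RWinv (y2 ^+ N) = y1 ^+ N + (y2 ^+ N - z1 ^+ N * y1 ^+ N) * x1 ^- N.
Proof.
move=> G Gt; rewrite /G /Gt.
have [[hz1 hz2] _ _ _ _] := hRW.
split; first exact: hz1.
split; first exact: hz2.
split; first exact: (claim3 hN hD hRW).
split; first exact: (claim4 hN hD hRW).
split; first exact: (claim5 hN hD hRW).
split; first exact: (claim6 hN hD hRW).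
split; first exact: (claim7 hN hD hRl hRW).
split; first exact: (claim8 hN hD hRl hRW).
split; first exact: (claim9 hN hD hRl hRW).
exact: (claim10 hN hD hRl hRW).
Qed.
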